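(* Fix $\beta\in[0,2]$ and let $M_0,M_1,M_2,\dots\in\mathfrak M^\beta$, with $\beta$-inversions $M_n^\beta$. 1. $M_n\to M_0$ on $\mathbb R^d_0$ if and only if $M_n^\beta\to M_0^\beta$ on $\mathbb R^d_0$. 2. $\lim_{\epsilon\downarrow0}\limsup_{n\to\infty}\int_{|x|<\epsilon}|x|^2M_n(dx)=0$ if and only if $\lim_{N\to\infty}\limsup_{n\to\infty}\int_{|x|>N}|x|^\beta M_n^\beta(dx)=0$.
   Context: For $\beta\in[0,2]$, $\mathfrak M^\beta$ is the class of Borel measures $M$ on $\mathbb R^d$ with $M(\{0\})=0$ and $\int_{\mathbb R^d}(|x|^2\wedge|x|^\beta)M(dx)<\infty$. For $M\in\mathfrak M^\beta$, the $\beta$-inversion $M^\beta$ is the measure with $M^\beta(\{0\})=0$ and $M^\beta(A)=\int_{\mathbb R^d}1_A(x/|x|^2)|x|^{2+\beta}M(dx)$ for Borel $A$. $\mathbb R^d_0=\mathbb R^d\setminus\{0\}$, and $M_n\to M_0$ on $\mathbb R^d_0$ means $\int f\,dM_n\to\int f\,dM_0$ for every bounded continuous $f:\mathbb R^d\to\mathbb R$ vanishing on a neighborhood of $0$ and on a neighborhood of infinity. *)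

(* Defs.v *)
From HB Require Import structures.
From mathcomp Require Import all_boot all_order all_algebra.
From mathcomp Require Import all_classical all_reals all_analysis.
Set Implicit Arguments. Unset Strict Implicit. Unset Printing Implicit Defensive.
Import Order.TTheory GRing.Theory Num.Theory.
Import numFieldNormedType.Exports.
Local Open Scope classical_set_scope.
Local Open Scope ring_scope.

(* R^d, realised as row vectors 'rV[R]_d with their (product = Euclidean)
   topology and vector space structure, equipped with the Borel sigma-algebra
   (the sigma-algebra generated by the open sets). *)
Definition Rd (R : realType) (d : nat) : Type := 'rV[R]_d.

Section Rd_instances.
Variables (R : realType) (d : nat).
HB.instance Definition _ := NormedModule.on (Rd R d).
HB.instance Definition _ := @isMeasurable.Build default_measure_display
  (Rd R d) <<s (@open ('rV[R]_d)) >>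
  (@sigma_algebra0 _ setT _) (@sigma_algebraC _ _)
  (@sigma_algebra_bigcup _ setT _).
End Rd_instances.

Section defs.
Variables (R : realType) (d : nat).

Definition enorm (x : Rd R d) : R := Num.sqrt (\sum_(i < d) x ord0 i ^+ 2).

Definition inv_pt (x : Rd R d) : Rd R d := (enorm x ^+ 2)^-1 *: x.

Definition frakM (beta : R) (M : {measure set (Rd R d) -> \bar R}) : Prop :=
  M [set (0%R : Rd R d)] = 0%E /\
  (\int[M]_x (Num.min (enorm x ^+ 2) (enorm x `^ beta))%:E < +oo)%E.

Definition is_beta_inversion (beta : R)
    (M Mb : {measure set (Rd R d) -> \bar R}) : Prop :=
  Mb [set (0%R : Rd R d)] = 0%E /\
  forall A : set (Rd R d), measurable A ->
    Mb A = (\int[M]_(x in [set~ (0%R : Rd R d)]) ((\1_A (inv_pt x))%:E *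
                                     (enorm x `^ (2 + beta))%:E))%E.

Definition conv_Rd0 (M : nat -> {measure set (Rd R d) -> \bar R})
    (M0 : {measure set (Rd R d) -> \bar R}) : Prop :=
  forall f : Rd R d -> R,
    continuous f ->
    (exists C : R, forall x, `|f x| <= C) ->
    (exists r : R, 0 < r /\ forall x, enorm x < r -> f x = 0) ->
    (exists N : R, forall x, N < enorm x -> f x = 0) ->
    (fun n => (\int[M n]_x (f x)%:E)%E) @ \oo --> (\int[M0]_x (f x)%:E)%E.
End defs.

(* Main.v *)
Require Import Defs.
From HB Require Import structures.
From mathcomp Require Import all_boot all_order all_algebra.
From mathcomp Require Import all_classical all_reals all_analysis.
From mathcomp Require Import measurable_realfun.
Import Order.TTheory GRing.Theory Num.Theory.
Import numFieldNormedType.Exports.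
Local Open Scope classical_set_scope.
Local Open Scope ring_scope.


Section basic.
Variables (R : realType) (d : nat).
Implicit Types x y : Rd R d.

Lemma enorm_ge0 x : 0 <= enorm x.
Proof. exact: sqrtr_ge0. Qed.

Lemma enorm0 : enorm (0 : Rd R d) = 0.
Proof.
rewrite /enorm big1 ?sqrtr0// => i _; rewrite mxE expr0n.
done.
Qed.

Lemma enorm_eq0 x : enorm x = 0 -> x = 0.
Proof.
move=> /eqP; rewrite /enorm sqrtr_eq0 => H.
have H0 : \sum_(i < d) x ord0 i ^+ 2 = 0.
  apply/eqP; rewrite eq_le H /=; apply: sumr_ge0 => i _; exact: sqr_ge0.
apply/matrixP => i j; rewrite (ord1 i) mxE.
have := @psumr_eq0P _ _ predT (fun i => x ord0 i ^+ 2).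
move=> /(_ (fun i _ => sqr_ge0 _) H0 j isT) /eqP; rewrite sqrf_eq0 => /eqP.
done.
Qed.

Lemma enorm_gt0 x : x != 0 -> 0 < enorm x.
Proof.
move=> x0; rewrite lt_neqAle enorm_ge0 andbT; apply/eqP => /esym /enorm_eq0.
by move/eqP: x0.
Qed.

Lemma enormZ (c : R) x : enorm (c *: x) = `|c| * enorm x.
Proof.
rewrite /enorm.
under eq_bigr do rewrite mxE exprMn.
by rewrite -mulr_sumr sqrtrM ?sqr_ge0// sqrtr_sqr.
Qed.

Lemma enorm_inv x : enorm (inv_pt x) = (enorm x)^-1.
Proof.
rewrite /inv_pt enormZ ger0_norm; last by rewrite invr_ge0 exprn_ge0 ?enorm_ge0.
have [->|e0] := eqVneq (enorm x) 0; first by rewrite mulr0 invr0.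
by rewrite expr2 invfM -mulrA mulVf ?mulr1.
Qed.

Lemma inv_ptK x : inv_pt (inv_pt x) = x.
Proof.
have [->|x0] := eqVneq x 0; first by rewrite /inv_pt scaler0 scaler0.
have e0 : enorm x != 0 by rewrite gt_eqF ?enorm_gt0.
rewrite {1}/inv_pt enorm_inv /inv_pt scalerA exprVn invrK mulfV ?scale1r//.
by rewrite expf_neq0.
Qed.

Lemma inv_pt0 : inv_pt (0 : Rd R d) = 0.
Proof. by rewrite /inv_pt scaler0. Qed.

Lemma continuous_enorm : continuous (@enorm R d).
Proof.
have H : forall s : seq 'I_d,
    continuous (fun y : Rd R d => \sum_(i <- s) y ord0 i ^+ 2).
  elim => [|i s IH] y.
    rewrite (_ : (fun y0 : Rd R d => \sum_(i <- [::]) y0 ord0 i ^+ 2) = cst 0).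
      exact: cst_continuous.
    by apply/funext => z; rewrite big_nil.
  rewrite (_ : (fun y0 : Rd R d => \sum_(j <- i :: s) y0 ord0 j ^+ 2) =
     (fun y0 => y0 ord0 i ^+ 2 + \sum_(j <- s) y0 ord0 j ^+ 2)); last first.
    by apply/funext => z; rewrite big_cons.

  apply: cvgD; [exact: nbhs_filter|
    idtac|exact: IH].
  exact: (continuous_comp (@coord_continuous R 1 d ord0 i y) (@exprn_continuous R 2 _)).
move=> x; apply: continuous_comp; last exact: sqrt_continuous.
exact: H.
Qed.

End basic.


Section meas.
Variables (R : realType) (d : nat).
Implicit Types x y : Rd R d.

Lemma continuous_inv_pt x : x != 0 -> {for x, continuous (@inv_pt R d)}.
Proof.
move=> x0; rewrite /inv_pt.
apply: continuousZ; last exact: cvg_id.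
apply: continuousV; first by rewrite expf_neq0 // gt_eqF // enorm_gt0.
exact: (continuous_comp (@continuous_enorm R d x) (@exprn_continuous R 2 _)).
Qed.

Lemma open_mRd (A : set (Rd R d)) : open A -> measurable A.
Proof. by move=> oA; exact: sub_sigma_algebra. Qed.

Lemma open_pos : open [set y : Rd R d | 0 < enorm y].
Proof.
have := (proj1 (continuousP _) (@continuous_enorm R d) `]0, +oo[%classic).
rewrite /preimage /=.
have -> : [set t : Rd R d | `]0, +oo[%classic (enorm t)] = [set y | 0 < enorm y].
  by apply/funext => y; rewrite /= in_itv /= andbT.
apply; exact: interval_open.
Qed.

Lemma continuous_measurable (g : Rd R d -> R) : continuous g -> measurable_fun setT g.
Proof.
move=> /continuousP cg; apply: (measurability _ (measurable_realfun.RGenOpens.measurableE R)).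
move=> _ [_ [a [b ->] <-]]; rewrite setTI; apply: open_mRd.
by apply/cg/interval_open.
Qed.

Lemma measurable_enorm : measurable_fun setT (@enorm R d).
Proof. exact: continuous_measurable (@continuous_enorm R d). Qed.

Lemma measurable_inv_pt : measurable_fun setT (@inv_pt R d).
Proof.
apply: (@measurability _ _ _ _ setT _ (@open (Rd R d))) => //.
move=> _ [U oU <-]; rewrite setTI.
have -> : (@inv_pt R d) @^-1` U = ([set y | 0 < enorm y] `&` (@inv_pt R d) @^-1` U) `|`
    ([set 0] `&` (@inv_pt R d) @^-1` U).
  apply/funext => y; apply/propext; split; last by case => -[].
  have [->|y0] := eqVneq y 0; first by move=> ?; right.
  by move=> ?; left; split => //=; exact: enorm_gt0.
apply: measurableU.
- apply: open_mRd; rewrite openE => z [/= ez Uz].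
  apply: filterI.
    by apply: open_nbhs_nbhs; split => //; exact: open_pos.
  apply: (continuous_inv_pt _) => /=.
    by apply/eqP => z0; move: ez; rewrite z0 enorm0 ltxx.
  by apply: open_nbhs_nbhs; split.
- have [U0|U0] := pselect (U (inv_pt 0)).
    have -> : [set (0 : Rd R d)] `&` (@inv_pt R d) @^-1` U = ~` [set y | 0 < enorm y].
      apply/funext => y; apply/propext; split => /=.
        by move=> [-> _]; rewrite enorm0 ltxx.
      move=> /negP; rewrite lt_neqAle enorm_ge0 andbT negbK eq_sym => /eqP /enorm_eq0 ->.
      by split.
    by apply: measurableC; apply: open_mRd; exact: open_pos.
  have -> : [set (0 : Rd R d)] `&` (@inv_pt R d) @^-1` U = set0.
    by apply/funext => y; apply/propext; split => //= -[-> ?].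
  exact: measurable0.
Qed.
End meas.


Import HBNNSimple.

Section cov.
Local Open Scope ereal_scope.
Context dT (T : measurableType dT) (R : realType).
Variables (mu nu : {measure set T -> \bar R}) (phi : T -> T) (w : T -> R).
Hypothesis mphi : measurable_fun setT phi.
Hypothesis mw : measurable_fun setT w.
Hypothesis w0 : forall x, (0 <= w x)%R.
Hypothesis H : forall A, measurable A ->
  nu A = \int[mu]_x ((\1_A (phi x))%:E * (w x)%:E).

Lemma cov_nnsfun (s : {nnsfun T >-> R}) :
  \int[nu]_x (s x)%:E = \int[mu]_x ((s (phi x))%:E * (w x)%:E).
Proof.
transitivity (\int[nu]_x
   (\sum_(y \in range s) (y * \1_(s @^-1` [set y]) x)%:E)).
  by apply: eq_integral => t _; rewrite fsumEFin // -fimfunE.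
transitivity (\int[mu]_x (\sum_(y \in range s)
    (y * \1_(s @^-1` [set y]) (phi x))%:E * (w x)%:E)); last first.
  apply: eq_integral => t _.
  rewrite -ge0_mule_fsuml => [|y]; last exact: nnfun_muleindic_ge0.
  by rewrite fsumEFin // -fimfunE.
rewrite ge0_integral_fsum//; last by move=> y t _; rewrite EFinM; exact: nnfun_muleindic_ge0.
rewrite ge0_integral_fsum//; last first.
  move=> y t _; apply: mule_ge0; last by rewrite lee_fin.
  rewrite EFinM; exact: nnfun_muleindic_ge0.
  move=> y; apply: emeasurable_funM; last exact/measurable_EFinP.
  apply/measurable_EFinP; apply: measurable_funM => //.
  apply: measurableT_comp => //.
apply: eq_fsbigr => r rs.
rewrite integralZl_indic_nnsfun// integral_indic// setIT.
under eq_integral do rewrite EFinM -muleA.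
rewrite ge0_integralZl//; last 2 first.
  - by move=> t _; rewrite mule_ge0 ?lee_fin.
  - by move: rs; rewrite inE => -[t _ <-]; rewrite lee_fin fun_ge0.
- by rewrite H //; exact: measurable_sfunP.
- apply: emeasurable_funM; last exact/measurable_EFinP.
  apply/measurable_EFinP; apply: measurableT_comp => //.
- by move=> y; apply/measurable_EFinP; apply: measurable_funM => //.
Qed.


Lemma cov (h : T -> \bar R) : (forall x, 0 <= h x) -> measurable_fun setT h ->
  \int[nu]_x h x = \int[mu]_x (h (phi x) * (w x)%:E).
Proof.
move=> h0 mh.
pose s := nnsfun_approx measurableT mh.
have L1 : \int[nu]_x (s n x)%:E @[n --> \oo] --> \int[nu]_x h x.
  have := @cvg_monotone_convergence _ _ _ nu setT measurableT
    (fun n x => (s n x)%:E).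
  have -> : \int[nu]_x h x = \int[nu]_x limn (fun n => (s n x)%:E).
    apply: eq_integral => x _; apply/esym/cvg_lim => //.
    exact: (@cvg_nnsfun_approx _ _ _ _ measurableT _ mh (fun x _ => h0 x) x I).
  apply.
  - by move=> n; exact/measurable_EFinP.
  - by move=> n x _; rewrite lee_fin.
  - by move=> x _ a b ab; rewrite lee_fin; exact/lefP/nd_nnsfun_approx.
have L2 : \int[mu]_x ((s n (phi x))%:E * (w x)%:E) @[n --> \oo] -->
    \int[mu]_x (h (phi x) * (w x)%:E).
  have := @cvg_monotone_convergence _ _ _ mu setT measurableT
    (fun n x => (s n (phi x))%:E * (w x)%:E).
  have -> : \int[mu]_x (h (phi x) * (w x)%:E) =
      \int[mu]_x limn (fun n => (s n (phi x))%:E * (w x)%:E).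
    apply: eq_integral => x _; apply/esym/cvg_lim => //.
    apply: cvgeZr => //.
    exact: (@cvg_nnsfun_approx _ _ _ _ measurableT _ mh (fun x _ => h0 x) (phi x) I).
  apply.
  - move=> n; apply: emeasurable_funM; last exact/measurable_EFinP.
    by apply/measurable_EFinP; apply: measurableT_comp.
  - by move=> n x _; rewrite mule_ge0 ?lee_fin.
  - move=> x _ a b ab; rewrite lee_wpmul2r ?lee_fin//.
    exact/lefP/nd_nnsfun_approx.
rewrite -(cvg_lim _ L1) // -(cvg_lim _ L2) //.
congr (limn _); apply/funext => n; exact: cov_nnsfun.
Qed.

End cov.


Section T.
Variables (R : realType) (d : nat) (p : R).
Hypothesis p0 : 0 < p.
Local Notation inv := (@inv_pt R d).
Definition Wp (x : Rd R d) : R := enorm x `^ p.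
Definition Tf (f : Rd R d -> R) x := f (inv x) * Wp x.

Lemma continuous_Wp x : x != 0 -> {for x, continuous Wp}.
Proof.
move=> x0.
have h : {for enorm x, continuous (fun t : R => t `^ p)}.
  apply: differentiable_continuous; apply/derivable1_diffP.
  by apply: derivable_powR; rewrite in_itv /= andbT enorm_gt0.
exact: (continuous_comp (@continuous_enorm R d x) h).
Qed.

Lemma nbhs_small (r : R) (x : Rd R d) : enorm x < r -> \forall y \near x, enorm y < r.
Proof.
move=> xr; apply: open_nbhs_nbhs; split => //.
have := (proj1 (continuousP _) (@continuous_enorm R d) `]-oo, r[%classic).
have -> : (@enorm R d) @^-1` `]-oo, r[%classic = [set y : Rd R d | enorm y < r].
  by apply/funext => y; rewrite /preimage /= in_itv.
apply; exact: interval_open.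
Qed.

Lemma T_test f : continuous f -> (exists C, forall x, `|f x| <= C) ->
  (exists r, 0 < r /\ forall x, enorm x < r -> f x = 0) ->
  (exists N, forall x, N < enorm x -> f x = 0) ->
  [/\ continuous (Tf f), (exists C, forall x, `|Tf f x| <= C),
      (exists r, 0 < r /\ forall x, enorm x < r -> Tf f x = 0) &
      (exists N, forall x, N < enorm x -> Tf f x = 0)].
Proof.
move=> cf [C hC] [r [r0 hr]] [N hN].
set N1 := Num.max N 1.
have N10 : 0 < N1 by rewrite lt_max ltr01 orbT.
have f0 : f 0 = 0 by apply: hr; rewrite enorm0.
have small x : enorm x < N1^-1 -> Tf f x = 0.
  move=> xs; rewrite /Tf.
  have [->|x0] := eqVneq x 0; first by rewrite inv_pt0 f0 mul0r.
  rewrite hN ?mul0r // enorm_inv.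
  apply: (@le_lt_trans _ _ N1); first by rewrite le_max lexx.
  by rewrite -(invrK N1) ltf_pV2 ?posrE ?invr_gt0 ?enorm_gt0.
have big x : r^-1 < enorm x -> Tf f x = 0.
  move=> xb; rewrite /Tf hr ?mul0r // enorm_inv.
  have ex : 0 < enorm x by apply: lt_trans xb; rewrite invr_gt0.
  by rewrite -(invrK r) ltf_pV2 ?posrE ?invr_gt0.
split.
- move=> x; have [->|x0] := eqVneq x 0.
    have E : \forall y \near (0 : Rd R d), cst (Tf f 0) y = Tf f y.
      have := @nbhs_small (N1^-1) 0.
      rewrite enorm0 invr_gt0 => /(_ N10); apply: filterS => y ys.
      by rewrite /cst (small _ ys) small // enorm0 invr_gt0.
    exact: (cvg_trans (near_eq_cvg E) (cvg_cst _)).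
  apply: continuousM; last exact: continuous_Wp.
  apply: continuous_comp; first exact: continuous_inv_pt.
  exact: cf.
- have C0 : 0 <= C by apply: le_trans (hC 0); exact: normr_ge0.
  exists (C * (r^-1 `^ p)) => x.
  have [xb|xb] := ltP (r^-1) (enorm x).
    by rewrite big // normr0 mulr_ge0 // powR_ge0.
  rewrite /Tf normrM; apply: ler_pM; [exact: normr_ge0|exact: normr_ge0|exact: hC|].
  rewrite ger0_norm ?powR_ge0 //; apply: ge0_ler_powR => //.
  - exact: ltW.
  - by rewrite nnegrE enorm_ge0.
  - by rewrite nnegrE invr_ge0 ltW.
- exists N1^-1; split; [by rewrite invr_gt0|exact: small].
- by exists r^-1.
Qed.

Lemma Wp0 : Wp 0 = 0.
Proof. by rewrite /Wp enorm0 powR0 // gt_eqF. Qed.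

Lemma WpinvW x : x != 0 -> Wp (inv x) * Wp x = 1.
Proof.
move=> x0; rewrite /Wp enorm_inv -powRM ?invr_ge0 ?enorm_ge0 //.
by rewrite mulVf ?gt_eqF ?enorm_gt0 // powR1.
Qed.

Lemma TTf f x : f 0 = 0 -> Tf (Tf f) x = f x.
Proof.
move=> f0; rewrite /Tf; have [->|x0] := eqVneq x 0.
  by rewrite Wp0 mulr0 f0.
by rewrite inv_ptK -mulrA WpinvW // mulr1.
Qed.
End T.


Lemma lim_swap (R : realType) (F G : R -> \bar R) :
  (forall N, 0 < N -> G N = F N^-1) ->
  (F @ 0^'+ --> 0%E) <-> (G @ +oo --> 0%E).
Proof.
move=> key; split.
- move=> HF U /HF /nbhs_ballP [e /= e0 he].
  exists e^-1; split; first exact: num_real.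
  move=> N hN.
  have N0 : 0 < N by apply: lt_trans hN; rewrite invr_gt0.
  rewrite /= key //; apply: he; last by rewrite invr_gt0.
  rewrite /ball /= sub0r normrN gtr0_norm ?invr_gt0 //.
  by rewrite -(invrK e) ltf_pV2 ?posrE ?invr_gt0.
- move=> HG U /HG [Mx [Mr hM]].
  apply/nbhs_ballP; exists (Num.max Mx 1)^-1 => /=.
    by rewrite invr_gt0 lt_max ltr01 orbT.
  move=> y hy y0.
  rewrite /ball /= sub0r normrN gtr0_norm // in hy.
  have h := hM y^-1; rewrite /= key ?invr_gt0 // invrK in h; apply: h.
  apply: (@le_lt_trans _ _ (Num.max Mx 1)); first by rewrite le_max lexx.
  by rewrite -(invrK (Num.max Mx 1)) ltf_pV2 ?posrE ?invr_gt0 ?lt_max ?ltr01 ?orbT.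
Qed.


Section main.
Variables (R : realType) (d : nat) (beta : R).
Hypothesis hb : 0 <= beta <= 2.
Variables (M Mb : nat -> {measure set (Rd R d) -> \bar R}).
Hypothesis HM : forall n, frakM beta (M n).
Hypothesis HMb : forall n, is_beta_inversion beta (M n) (Mb n).

Local Notation inv := (@inv_pt R d).
Definition W (x : Rd R d) : R := enorm x `^ (2 + beta).

Lemma p_gt0 : 0 < 2 + beta.
Proof. by case/andP: hb => h _; rewrite ltr_pwDl. Qed.

Lemma W0 : W 0 = 0.
Proof. by rewrite /W enorm0 powR0 // gt_eqF // p_gt0. Qed.

Lemma W_ge0 x : 0 <= W x.
Proof. exact: powR_ge0. Qed.

Lemma mW : measurable_fun setT W.
Proof. exact: measurableT_comp (measurable_powR _) (@measurable_enorm R d). Qed.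

Lemma WinvW x : x != 0 -> W (inv x) * W x = 1.
Proof.
move=> x0; rewrite /W enorm_inv -powRM ?invr_ge0 ?enorm_ge0 //.
by rewrite mulVf ?gt_eqF ?enorm_gt0 // powR1.
Qed.

Local Open Scope ereal_scope.

Lemma Hinv n A : measurable A ->
  Mb n A = \int[M n]_x ((\1_A (inv x))%:E * (W x)%:E).
Proof.
move=> mA; rewrite (proj2 (HMb n) A mA) integral_mkcond.
apply: eq_integral => x _; rewrite /patch.
have [->|x0] := eqVneq x 0%R; first by rewrite W0 mule0 memNset //=; apply; exact: erefl.
by rewrite mem_set //=; exact/eqP.
Qed.

Lemma covM n (h : Rd R d -> \bar R) : (forall x, 0 <= h x) ->
  measurable_fun setT h ->
  \int[Mb n]_x h x = \int[M n]_x (h (inv x) * (W x)%:E).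
Proof.
move=> h0 mh; apply: cov => //.
- exact: measurable_inv_pt.
- exact: mW.
- exact: W_ge0.
- by move=> A mA; exact: Hinv.
Qed.

Lemma cov_signed n (f : Rd R d -> R) : measurable_fun setT f ->
  \int[Mb n]_x (f x)%:E = \int[M n]_x (f (inv x) * W x)%:E.
Proof.
move=> mf; rewrite integralE [RHS]integralE.
have mf' : measurable_fun setT (EFin \o f) by exact/measurable_EFinP.
rewrite !covM //; last 2 first.
- exact: measurable_funeneg.
- exact: measurable_funepos.
congr (_ - _); apply: eq_integral => x _.
- rewrite !funeposE /= -!EFin_max -EFinM; congr EFin.
  by rewrite mulrC maxr_pMr ?W_ge0 // mulr0 mulrC.
- rewrite !funenegE /= -!EFin_max -EFinM; congr EFin.
  by rewrite mulrC maxr_pMr ?W_ge0 // mulr0 mulrN mulrC.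
Qed.


Local Close Scope ereal_scope.

Lemma open_gt (a : R) : open [set y : Rd R d | a < enorm y].
Proof.
have := (proj1 (continuousP _) (@continuous_enorm R d) `]a, +oo[%classic).
have -> : (@enorm R d) @^-1` `]a, +oo[%classic = [set y : Rd R d | a < enorm y].
  by apply/funext => y; rewrite /preimage /= in_itv /= andbT.
apply; exact: interval_open.
Qed.

Lemma open_lt (a : R) : open [set y : Rd R d | enorm y < a].
Proof.
have := (proj1 (continuousP _) (@continuous_enorm R d) `]-oo, a[%classic).
have -> : (@enorm R d) @^-1` `]-oo, a[%classic = [set y : Rd R d | enorm y < a].
  by apply/funext => y; rewrite /preimage /= in_itv.
apply; exact: interval_open.
Qed.

Lemma part1 : conv_Rd0 M (M 0%N) <-> conv_Rd0 Mb (Mb 0%N).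
Proof.
split.
- move=> H f cf bf zf inff.
  have [cT bT zT iT] := @T_test R d (2+beta) p_gt0 f cf bf zf inff.
  have mf := @continuous_measurable R d f cf.
  have e n : (\int[Mb n]_x (f x)%:E = \int[M n]_x (@Tf R d (2 + beta) f x)%:E)%E.
    by rewrite cov_signed.
  rewrite (e 0%N) (_ : (fun n => _) = fun n => (\int[M n]_x (@Tf R d (2 + beta) f x)%:E)%E).
    exact: H.
  by apply/funext => n; rewrite e.
- move=> H g cg bg zg ig.
  have [cT bT zT iT] := @T_test R d (2+beta) p_gt0 g cg bg zg ig.
  have mf := @continuous_measurable R d _ cT.
  have g0 : g 0 = 0 by case: zg => r [r0 hr]; apply: hr; rewrite enorm0.
  have e n : (\int[Mb n]_x (@Tf R d (2 + beta) g x)%:E = \int[M n]_x (g x)%:E)%E.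
    rewrite cov_signed //; apply: eq_integral => x _; congr EFin.
    exact: (@TTf R d (2 + beta) p_gt0 g x g0).
  rewrite -(e 0%N) (_ : (fun n => _) = fun n => (\int[Mb n]_x (@Tf R d (2 + beta) g x)%:E)%E).
    exact: H.
  by apply/funext => n; rewrite e.
Qed.


Lemma int_eq n (N : R) : 0 < N ->
  (\int[Mb n]_(x in [set x | (N < enorm x)%R]) (enorm x `^ beta)%:E =
   \int[M n]_(x in [set x | (enorm x < N^-1)%R]) (enorm x ^+ 2)%:E)%E.
Proof.
move=> N0.
have mD : measurable [set x : Rd R d | N < enorm x] by apply: open_mRd; exact: open_gt.
rewrite integral_mkcond covM; last 2 first.
- by move=> x; rewrite /patch; case: ifPn => // _; rewrite lee_fin powR_ge0.
- apply/(measurable_restrictT _ _).1 => //; apply: measurable_funTS.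
  apply/measurable_EFinP.
  exact: measurableT_comp (measurable_powR _) (@measurable_enorm R d).
rewrite [RHS]integral_mkcond; apply: eq_integral => x _; rewrite /patch.
have [->|x0] := eqVneq x 0.
  rewrite inv_pt0 W0 mule0 mem_set; last by rewrite /= enorm0 invr_gt0.
  by rewrite enorm0 expr0n.
have e0 := @enorm_gt0 R d x x0.
have key : (N < enorm (inv x)) = (enorm x < N^-1).
  by rewrite enorm_inv -{1}(invrK N) ltf_pV2 ?posrE ?invr_gt0.
have [h|h] := boolP (enorm x < N^-1).
- rewrite mem_set /=; last by rewrite key.
  rewrite mem_set //= -EFinM; congr EFin.
  rewrite /W powRD; last by apply/implyP => _; rewrite gt_eqF.
  rewrite powR_mulrn ?enorm_ge0 // mulrCA enorm_inv.
  by rewrite -powRM ?invr_ge0 ?enorm_ge0 // mulVf ?gt_eqF // powR1 mulr1.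
- rewrite memNset /=; last by rewrite key; apply/negP.
  rewrite memNset /=; last by apply/negP.
  by rewrite mul0e.
Qed.

Lemma part2 :
  ((fun eps : R => limn_esup (fun n =>
       (\int[M n]_(x in [set x | (enorm x < eps)%R]) (enorm x ^+ 2)%:E)%E))
     @ 0^'+ --> 0%E
   <->
   (fun N : R => limn_esup (fun n =>
       (\int[Mb n]_(x in [set x | (N < enorm x)%R]) (enorm x `^ beta)%:E)%E))
     @ +oo --> 0%E).
Proof.
apply: lim_swap => N N0; congr limn_esup; apply/funext => n.
exact: int_eq.
Qed.

End main.

Theorem proposition1 (R : realType) (d : nat) (beta : R)
    (M Mb : nat -> {measure set (Rd R d) -> \bar R}) :
  0 <= beta <= 2 ->
  (forall n, frakM beta (M n)) ->
  (forall n, is_beta_inversion beta (M n) (Mb n)) ->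
  (conv_Rd0 M (M 0%N) <-> conv_Rd0 Mb (Mb 0%N)) /\
  ((fun eps : R => limn_esup (fun n =>
       (\int[M n]_(x in [set x | (enorm x < eps)%R]) (enorm x ^+ 2)%:E)%E))
     @ 0^'+ --> 0%E
   <->
   (fun N : R => limn_esup (fun n =>
       (\int[Mb n]_(x in [set x | (N < enorm x)%R]) (enorm x `^ beta)%:E)%E))
     @ +oo --> 0%E).
Proof.
move=> hb HM HMb; split.
- exact: (@part1 R d beta hb M Mb HMb).
- exact: (@part2 R d beta hb M Mb HMb).
Qed.
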